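(* Assume the standing $J$-self-adjoint setting. Assume also that $A_0$ and $A_1$ are bounded, that $d=\mathrm{dist}(\mathrm{spec}(A_0),\mathrm{spec}(A_1))>0$, and that $\|V\|<d/2$. Then $\mathrm{spec}(L)\subset\mathbb R$.
   Context: Standing $J$-self-adjoint setting: - $A_0$ and $A_1$ are self-adjoint operators on Hilbert spaces $\mathfrak H_0$ and $\mathfrak H_1$. - $B\in\mathcal B(\mathfrak H_1,\mathfrak H_0)$. - $\mathfrak H=\mathfrak H_0\oplus\mathfrak H_1$, $A=\mathrm{diag}(A_0,A_1)$, and $V=\begin{pmatrix}0&B\\-B^*&0\end{pmatrix}$. - $L=A+V$, i.e. $L(x_0\oplus x_1)=(A_0x_0+Bx_1)\oplus(-B^*x_0+A_1x_1)$. *)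

(* Defs.v *)
From Stdlib Require Import Reals.
Open Scope R_scope.

Record Cplx := mkC { Re : R; Im : R }.
Definition C0 : Cplx := mkC 0 0.
Definition C1 : Cplx := mkC 1 0.
Definition Cadd (z w : Cplx) : Cplx := mkC (Re z + Re w) (Im z + Im w).
Definition Copp (z : Cplx) : Cplx := mkC (- Re z) (- Im z).
Definition Csub (z w : Cplx) : Cplx := Cadd z (Copp w).
Definition Cmul (z w : Cplx) : Cplx :=
  mkC (Re z * Re w - Im z * Im w) (Re z * Im w + Im z * Re w).
Definition Cconj (z : Cplx) : Cplx := mkC (Re z) (- Im z).
Definition Cabs (z : Cplx) : R := sqrt (Re z ^ 2 + Im z ^ 2).

Record Hilbert := {
  hcar :> Type;
  hzero : hcar;
  hadd : hcar -> hcar -> hcar;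
  hopp : hcar -> hcar;
  hscal : Cplx -> hcar -> hcar;
  hinner : hcar -> hcar -> Cplx;
  hadd_assoc : forall x y z, hadd x (hadd y z) = hadd (hadd x y) z;
  hadd_comm : forall x y, hadd x y = hadd y x;
  hadd_0 : forall x, hadd x hzero = x;
  hadd_opp : forall x, hadd x (hopp x) = hzero;
  hscal_1 : forall x, hscal C1 x = x;
  hscal_assoc : forall a b x, hscal (Cmul a b) x = hscal a (hscal b x);
  hscal_addv : forall a x y, hscal a (hadd x y) = hadd (hscal a x) (hscal a y);
  hscal_adds : forall a b x, hscal (Cadd a b) x = hadd (hscal a x) (hscal b x);
  hinner_add : forall x y z, hinner (hadd x y) z = Cadd (hinner x z) (hinner y z);
  hinner_scal : forall a x y, hinner (hscal a x) y = Cmul a (hinner x y);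
  hinner_conj : forall x y, hinner y x = Cconj (hinner x y);
  hinner_pos : forall x, 0 <= Re (hinner x x);
  hinner_def : forall x, hinner x x = C0 -> x = hzero;
  hcomplete : forall u : nat -> hcar,
    (forall eps, 0 < eps -> exists N, forall m n, (N <= m)%nat -> (N <= n)%nat ->
        sqrt (Re (hinner (hadd (u m) (hopp (u n))) (hadd (u m) (hopp (u n))))) < eps) ->
    exists l, forall eps, 0 < eps -> exists N, forall n, (N <= n)%nat ->
        sqrt (Re (hinner (hadd (u n) (hopp l)) (hadd (u n) (hopp l)))) < eps
}.

Arguments hzero {h}. Arguments hadd {h}. Arguments hopp {h}.
Arguments hscal {h}. Arguments hinner {h}.

Definition hnorm {H : Hilbert} (x : H) : R := sqrt (Re (hinner x x)).

Definition is_linear {H K : Hilbert} (f : H -> K) : Prop :=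
  (forall x y, f (hadd x y) = hadd (f x) (f y)) /\
  (forall a x, f (hscal a x) = hscal a (f x)).

Definition is_bounded {H K : Hilbert} (f : H -> K) : Prop :=
  exists M, forall x, hnorm (f x) <= M * hnorm x.

Definition bounded_op {H K : Hilbert} (f : H -> K) : Prop :=
  is_linear f /\ is_bounded f.

(* bounded self-adjoint operator (for an everywhere defined bounded operator,
   self-adjointness is  <A x, y> = <x, A y> ) *)
Definition bounded_selfadjoint {H : Hilbert} (A : H -> H) : Prop :=
  bounded_op A /\ forall x y, hinner (A x) y = hinner x (A y).

Definition is_adjoint {H K : Hilbert} (B : H -> K) (Bs : K -> H) : Prop :=
  forall x y, hinner (B x) y = hinner x (Bs y).

Definition spectrum_gen {X : Type} (add : X -> X -> X) (scal : Cplx -> X -> X)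
  (norm : X -> R) (T : X -> X) (lam : Cplx) : Prop :=
  ~ exists S : X -> X,
      (forall x y, S (add x y) = add (S x) (S y)) /\
      (forall a x, S (scal a x) = scal a (S x)) /\
      (exists M, forall y, norm (S y) <= M * norm y) /\
      (forall x, S (add (T x) (scal (Copp lam) x)) = x) /\
      (forall y, add (T (S y)) (scal (Copp lam) (S y)) = y).

Definition spectrum {H : Hilbert} (T : H -> H) : Cplx -> Prop :=
  spectrum_gen (@hadd H) (@hscal H) (@hnorm H) T.

Definition sadd {H0 H1 : Hilbert} (x y : H0 * H1) : H0 * H1 :=
  (hadd (fst x) (fst y), hadd (snd x) (snd y)).
Definition sscal {H0 H1 : Hilbert} (a : Cplx) (x : H0 * H1) : H0 * H1 :=
  (hscal a (fst x), hscal a (snd x)).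
Definition snorm {H0 H1 : Hilbert} (x : H0 * H1) : R :=
  sqrt (hnorm (fst x) ^ 2 + hnorm (snd x) ^ 2).

Definition spectrum_sum {H0 H1 : Hilbert} (T : H0 * H1 -> H0 * H1) : Cplx -> Prop :=
  spectrum_gen (@sadd H0 H1) (@sscal H0 H1) (@snorm H0 H1) T.

(* V = [[0, B], [-B^*, 0]] *)
Definition Vop {H0 H1 : Hilbert} (B : H1 -> H0) (Bs : H0 -> H1)
  (x : H0 * H1) : H0 * H1 :=
  (B (snd x), hopp (Bs (fst x))).

Definition Lop {H0 H1 : Hilbert} (A0 : H0 -> H0) (A1 : H1 -> H1)
  (B : H1 -> H0) (Bs : H0 -> H1) (x : H0 * H1) : H0 * H1 :=
  (hadd (A0 (fst x)) (B (snd x)), hadd (hopp (Bs (fst x))) (A1 (snd x))).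

Definition is_opnorm_sum {H0 H1 : Hilbert} (T : H0 * H1 -> H0 * H1) (n : R) : Prop :=
  is_lub (fun r => exists x, snorm x <= 1 /\ r = snorm (T x)) n.

Definition is_dist (S T : Cplx -> Prop) (d : R) : Prop :=
  (forall z w, S z -> T w -> d <= Cabs (Csub z w)) /\
  (forall e, (forall z w, S z -> T w -> e <= Cabs (Csub z w)) -> e <= d).

(* Main.v *)
Require Import Defs.
From Stdlib Require Import Reals Lra Psatz Classical ClassicalEpsilon ZArith.
Open Scope R_scope.


Lemma Cext (a b c e : R) : a = c -> b = e -> mkC a b = mkC c e.
Proof. intros; subst; reflexivity. Qed.

Section Basic.
Variable H : Hilbert.
Implicit Types x y z : H.

Lemma hadd_0l x : hadd hzero x = x.
Proof. rewrite hadd_comm; apply hadd_0. Qed.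

Lemma hadd_cancel x y z : hadd x y = hadd x z -> y = z.
Proof.
  intro E. assert (E2 : hadd (hopp x) (hadd x y) = hadd (hopp x) (hadd x z)) by (rewrite E; reflexivity).
  rewrite !hadd_assoc in E2. rewrite (hadd_comm _ (hopp x) x), hadd_opp, !hadd_0l in E2. exact E2.
Qed.

Lemma hscal_0 x : hscal C0 x = hzero.
Proof.
  apply (hadd_cancel (hscal C0 x)). rewrite hadd_0. rewrite <- hscal_adds.
  f_equal. unfold Cadd, C0; simpl. apply Cext; ring.
Qed.

Lemma hopp_scal x : hopp x = hscal (mkC (-1) 0) x.
Proof.
  apply (hadd_cancel x). rewrite hadd_opp.
  rewrite <- (hscal_1 H x) at 1. rewrite <- hscal_adds.
  rewrite <- (hscal_0 x). f_equal. unfold Cadd, C1, C0; simpl. apply Cext; ring.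
Qed.

Lemma inner_addr x y z : hinner x (hadd y z) = Cadd (hinner x y) (hinner x z).
Proof.
  rewrite hinner_conj, hinner_add, (hinner_conj _ y x), (hinner_conj _ z x).
  destruct (hinner x y), (hinner x z). unfold Cconj, Cadd; simpl. apply Cext; ring.
Qed.

Lemma inner_scalr a x y : hinner x (hscal a y) = Cmul (Cconj a) (hinner x y).
Proof.
  rewrite hinner_conj, hinner_scal, (hinner_conj _ y x).
  destruct (hinner x y), a. unfold Cconj, Cmul; simpl. apply Cext; ring.
Qed.

Lemma inner_oppl x y : hinner (hopp x) y = Copp (hinner x y).
Proof.
  rewrite hopp_scal, hinner_scal. destruct (hinner x y). unfold Cmul, Copp; simpl. apply Cext; ring.
Qed.

Lemma inner_oppr x y : hinner x (hopp y) = Copp (hinner x y).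
Proof.
  rewrite hopp_scal, inner_scalr. destruct (hinner x y). unfold Cconj, Cmul, Copp; simpl. apply Cext; ring.
Qed.

Lemma inner_0l y : hinner hzero y = C0.
Proof.
  rewrite <- (hscal_0 y), hinner_scal. destruct (hinner y y). unfold Cmul, C0; simpl. apply Cext; ring.
Qed.

Lemma inner_0r y : hinner y hzero = C0.
Proof.
  rewrite hinner_conj, inner_0l. unfold Cconj, C0; simpl. apply Cext; ring.
Qed.

Lemma Re_sym x y : Re (hinner y x) = Re (hinner x y).
Proof. rewrite hinner_conj. reflexivity. Qed.

Lemma Im_sym x y : Im (hinner y x) = - Im (hinner x y).
Proof. rewrite hinner_conj. reflexivity. Qed.

Lemma Im_self x : Im (hinner x x) = 0.
Proof. pose proof (Im_sym x x). lra. Qed.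

Lemma nsq_nonneg x : 0 <= Re (hinner x x).
Proof. apply hinner_pos. Qed.

Lemma nsq_zero x : Re (hinner x x) = 0 -> x = hzero.
Proof.
  intro E. apply hinner_def. pose proof (Im_self x). destruct (hinner x x); simpl in *; subst. reflexivity.
Qed.

Lemma hnorm_sq x : hnorm x ^ 2 = Re (hinner x x).
Proof. unfold hnorm. rewrite pow2_sqrt; auto using nsq_nonneg. Qed.

Lemma hnorm_nonneg x : 0 <= hnorm x.
Proof. unfold hnorm; apply sqrt_pos. Qed.

End Basic.

Ltac expand :=
  repeat (rewrite ?hinner_add, ?inner_addr, ?inner_oppl, ?inner_oppr, ?hinner_scal,
               ?inner_scalr, ?inner_0l, ?inner_0r).
Ltac expand_in N :=
  repeat (rewrite ?hinner_add, ?inner_addr, ?inner_oppl, ?inner_oppr, ?hinner_scal,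
               ?inner_scalr, ?inner_0l, ?inner_0r in N).
Ltac csimpl := cbn [Re Im Cadd Cmul Copp Cconj C0 C1 Csub] in *.

Lemma eq_by_nsq (H : Hilbert) (u v : H) : Re (hinner (hadd u (hopp v)) (hadd u (hopp v))) = 0 -> u = v.
Proof.
  intro E. apply nsq_zero in E. apply (hadd_cancel H (hopp v)).
  rewrite (hadd_comm _ (hopp v) v), hadd_opp, hadd_comm. exact E.
Qed.

Ltac veq := apply eq_by_nsq; expand; csimpl; ring.

Lemma quad_disc (r p q : R) : 0 <= q -> (forall t, 0 <= r + 2 * t * p + t * t * q) -> p * p <= r * q.
Proof.
  intros Hq Ht. destruct (Req_dec q 0) as [E|E].
  - subst. destruct (Req_dec p 0) as [Ep|Ep]. subst; specialize (Ht 0); nra.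
    specialize (Ht (- (r + 1) / (2 * p))).
    assert (2 * (- (r + 1) / (2 * p)) * p = - (r + 1)) by (field; auto). lra.
  - assert (0 < q) by lra. specialize (Ht (- p / q)).
    assert (r + 2 * (- p / q) * p + (- p / q) * (- p / q) * q = r - p * p / q) by (field; lra).
    rewrite H0 in Ht. assert (p * p / q <= r) by lra.
    apply (Rmult_le_compat_r q) in H1; [|lra]. unfold Rdiv in H1. rewrite Rmult_assoc, Rinv_l in H1; lra.
Qed.

Lemma ri_cs (H : Hilbert) (x y : H) : Re (hinner x y) <= hnorm x * hnorm y.
Proof.
  assert (D : Re (hinner x y) * Re (hinner x y) <= Re (hinner x x) * Re (hinner y y)).
  { apply quad_disc. apply nsq_nonneg. intro t.
    pose proof (nsq_nonneg H (hadd x (hscal (mkC t 0) y))) as N.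
    expand_in N; csimpl. rewrite (Re_sym H x y) in N. nra. }
  unfold hnorm. rewrite <- sqrt_mult by apply nsq_nonneg.
  apply Rle_trans with (Rabs (Re (hinner x y))); [apply Rle_abs|].
  rewrite <- sqrt_Rsqr_abs. apply sqrt_le_1_alt. unfold Rsqr. exact D.
Qed.

Lemma ri_cs_abs (H : Hilbert) (x y : H) : Rabs (Re (hinner x y)) <= hnorm x * hnorm y.
Proof.
  pose proof (ri_cs H x y). pose proof (ri_cs H (hopp x) y).
  rewrite inner_oppl in H1. csimpl.
  assert (hnorm (hopp x) = hnorm x). { unfold hnorm. f_equal. expand; csimpl. ring. }
  rewrite H2 in H1. unfold Rabs; destruct Rcase_abs; lra.
Qed.

Lemma norm_opp (H : Hilbert) (x : H) : hnorm (hopp x) = hnorm x.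
Proof. unfold hnorm. f_equal. expand; csimpl. ring. Qed.

Lemma norm_le_sq (H : Hilbert) (x : H) (c : R) : 0 <= c -> Re (hinner x x) <= c * c -> hnorm x <= c.
Proof.
  intros. unfold hnorm. rewrite <- (sqrt_square c) by auto. apply sqrt_le_1_alt. auto.
Qed.

Lemma sq_le_norm (H : Hilbert) (x : H) (c : R) : 0 <= c -> c * c <= Re (hinner x x) -> c <= hnorm x.
Proof.
  intros. unfold hnorm. rewrite <- (sqrt_square c) by auto. apply sqrt_le_1_alt. auto.
Qed.

Lemma norm_triangle (H : Hilbert) (x y : H) : hnorm (hadd x y) <= hnorm x + hnorm y.
Proof.
  apply norm_le_sq. pose proof (hnorm_nonneg H x); pose proof (hnorm_nonneg H y); lra.
  expand; csimpl. rewrite (Re_sym H x y). pose proof (ri_cs H x y).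
  pose proof (hnorm_sq H x); pose proof (hnorm_sq H y). simpl in *. nra.
Qed.

Lemma nsq_scal (H : Hilbert) (a : Cplx) (x : H) :
  Re (hinner (hscal a x) (hscal a x)) = (Re a * Re a + Im a * Im a) * Re (hinner x x).
Proof. expand; csimpl. rewrite (Im_self H x). ring. Qed.

Lemma norm_scal_real (H : Hilbert) (t : R) (x : H) : hnorm (hscal (mkC t 0) x) = Rabs t * hnorm x.
Proof.
  unfold hnorm. rewrite nsq_scal. simpl. rewrite Rmult_0_l, Rplus_0_r, sqrt_mult.
  - fold (Rsqr t). rewrite sqrt_Rsqr_abs. reflexivity.
  - apply Rle_0_sqr.
  - apply nsq_nonneg.
Qed.

Lemma norm_scal_unit (H : Hilbert) (a : Cplx) (x : H) : Re a * Re a + Im a * Im a = 1 -> hnorm (hscal a x) = hnorm x.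
Proof. intro E. unfold hnorm. rewrite nsq_scal, E, Rmult_1_l. reflexivity. Qed.

Lemma norm_zero (H : Hilbert) : hnorm (@hzero H) = 0.
Proof. unfold hnorm. rewrite inner_0l. simpl. apply sqrt_0. Qed.

Lemma norm_zero_inv (H : Hilbert) (x : H) : hnorm x = 0 -> x = hzero.
Proof. intro E. apply nsq_zero. rewrite <- hnorm_sq, E. ring. Qed.

Lemma lin_zero (H K : Hilbert) (f : H -> K) : is_linear f -> f hzero = hzero.
Proof.
  intros [Ha Hs]. rewrite <- (hscal_0 H hzero), Hs, hscal_0. reflexivity.
Qed.

Lemma lin_opp (H K : Hilbert) (f : H -> K) (x : H) : is_linear f -> f (hopp x) = hopp (f x).
Proof. intros [Ha Hs]. rewrite !hopp_scal, Hs. reflexivity. Qed.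

Lemma Im_sa (H : Hilbert) (A : H -> H) (x : H) : (forall x y, hinner (A x) y = hinner x (A y)) ->
  Im (hinner (A x) x) = 0.
Proof. intro S. pose proof (Im_sym H (A x) x). rewrite <- S in H0. lra. Qed.

Lemma Cabs_real_sub (p a : R) : Cabs (Csub (mkC p 0) (mkC a 0)) = Rabs (p - a).
Proof.
  unfold Cabs, Csub, Cadd, Copp; simpl. rewrite <- sqrt_Rsqr_abs. f_equal. unfold Rsqr. ring.
Qed.

Lemma Copp_real (a : R) : Copp (mkC a 0) = mkC (-a) 0.
Proof. unfold Copp; simpl. apply Cext; ring. Qed.

Lemma norm_scal_oppreal (H : Hilbert) (a : R) (x : H) : hnorm (hscal (Copp (mkC a 0)) x) = Rabs a * hnorm x.
Proof. rewrite Copp_real, norm_scal_real, Rabs_Ropp. reflexivity. Qed.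

Lemma bound_abs (H K : Hilbert) (f : H -> K) : is_bounded f -> exists M, 0 <= M /\ forall x, hnorm (f x) <= M * hnorm x.
Proof.
  intros [M HM]. exists (Rabs M). split. apply Rabs_pos. intro x.
  eapply Rle_trans; [apply HM|]. apply Rmult_le_compat_r. apply hnorm_nonneg. apply RRle_abs.
Qed.

Lemma norm_sq_le (H K : Hilbert) (x : H) (y : K) (c : R) : 0 <= c -> hnorm x <= c * hnorm y ->
  Re (hinner x x) <= c * c * Re (hinner y y).
Proof.
  intros Hc Hl. rewrite <- !hnorm_sq. pose proof (hnorm_nonneg _ x). pose proof (hnorm_nonneg _ y).
  simpl. rewrite !Rmult_1_r. assert (0 <= c * hnorm y) by (apply Rmult_le_pos; auto).
  assert (hnorm x * hnorm x <= (c * hnorm y) * (c * hnorm y)) by (apply Rmult_le_compat; auto). nra.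
Qed.


Lemma not_spec (H : Hilbert) (T : H -> H) (lam : Cplx) : ~ spectrum T lam ->
  exists S : H -> H, is_linear S /\ (exists M, 0 <= M /\ forall y, hnorm (S y) <= M * hnorm y) /\
   (forall x, S (hadd (T x) (hscal (Copp lam) x)) = x) /\
   (forall y, hadd (T (S y)) (hscal (Copp lam) (S y)) = y).
Proof.
  intro N. unfold spectrum, spectrum_gen in N. apply NNPP in N.
  destruct N as [S [Sa [Ss [Sb [ST TS]]]]]. exists S. split; [split; auto|]. split; auto.
  apply (bound_abs H H S Sb).
Qed.

Lemma not_spec_lower (H : Hilbert) (T : H -> H) (lam : Cplx) : ~ spectrum T lam ->
  exists M, 0 <= M /\ forall w, hnorm w <= M * hnorm (hadd (T w) (hscal (Copp lam) w)).
Proof.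
  intro N. destruct (not_spec H T lam N) as [S [_ [[M [HM0 HM]] [ST _]]]].
  exists M. split; auto. intro w. rewrite <- (ST w) at 1. apply HM.
Qed.

Lemma shift_eq (H : Hilbert) (A : H -> H) (a s : R) (w : H) :
  hadd (A w) (hscal (Copp (mkC (a + s) 0)) w) =
  hadd (hadd (A w) (hscal (Copp (mkC a 0)) w)) (hscal (mkC (-s) 0) w).
Proof. veq. Qed.

Lemma sa_lower (H : Hilbert) (A : H -> H) (hA : bounded_selfadjoint A) (a dl : R) (hdl : 0 < dl)
  (hsp : forall mu, spectrum A mu -> dl <= Cabs (Csub mu (mkC a 0))) :
  forall x, dl * hnorm x <= hnorm (hadd (A x) (hscal (Copp (mkC a 0)) x)).
Proof.
  destruct hA as [[Alin Abd] Asa].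
  destruct (bound_abs H H A Abd) as [MA [HMA0 HMA]].
  set (c := Copp (mkC a 0)).
  set (T := fun x => hadd (A x) (hscal c x)).
  change (forall x, dl * hnorm x <= hnorm (T x)).
  assert (MT : forall w, hnorm (T w) <= (MA + Rabs a) * hnorm w).
  { intro w. unfold T. eapply Rle_trans. apply norm_triangle. unfold c. rewrite norm_scal_oppreal.
    specialize (HMA w). lra. }
  assert (NS : ~ spectrum A (mkC a 0)).
  { intro S. apply hsp in S. rewrite Cabs_real_sub in S. replace (a - a) with 0 in S by ring.
    rewrite Rabs_R0 in S. lra. }
  destruct (not_spec H A _ NS) as [R [Rlin [[MR [HMR0 HMR]] [RT TR]]]].
  fold c in RT, TR. change (forall x, R (T x) = x) in RT. change (forall y, T (R y) = y) in TR.
  assert (R0 : R hzero = hzero) by (apply lin_zero; auto).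
  assert (Rsa : forall y w, hinner (R y) w = hinner y (R w)).
  { intros y w. rewrite <- (TR w) at 1. rewrite <- (TR y) at 2. unfold T.
    expand. rewrite (Asa (R y) (R w)). unfold c, Copp, Cconj, Cmul, Cadd; simpl.
    destruct (hinner (R y) (A (R w))), (hinner (R y) (R w)). apply Cext; simpl; ring. }
  intro x.
  destruct (Req_dec (hnorm x) 0) as [Ex|Ex].
  { rewrite Ex, Rmult_0_r. apply hnorm_nonneg. }
  assert (Hx : 0 < hnorm x) by (pose proof (hnorm_nonneg H x); lra).
  set (E := fun r => exists y, hnorm y <= 1 /\ r = hnorm (R y)).
  assert (Eb : bound E).
  { exists MR. intros r [y [Hy ->]]. eapply Rle_trans. apply HMR. nra. }
  assert (Ene : exists r, E r) by (exists (hnorm (R hzero)); exists hzero; split; auto; rewrite norm_zero; lra).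
  destruct (completeness E Eb Ene) as [r [Hub Hlub]].
  assert (r0 : 0 <= r).
  { apply Hub. exists hzero. rewrite R0, norm_zero. split; auto; lra. }
  assert (r1 : forall y, hnorm (R y) <= r * hnorm y).
  { intro y. destruct (Req_dec (hnorm y) 0) as [Ey|Ey].
    - apply norm_zero_inv in Ey. subst. rewrite R0, norm_zero. lra.
    - assert (0 < hnorm y) by (pose proof (hnorm_nonneg H y); lra).
      assert (U : hnorm (R (hscal (mkC (/ hnorm y) 0) y)) <= r).
      { apply Hub. exists (hscal (mkC (/ hnorm y) 0) y). split; auto.
        rewrite norm_scal_real, Rabs_right. rewrite Rinv_l; lra. left. apply Rinv_0_lt_compat; auto. }
      destruct Rlin as [_ Rs]. rewrite Rs, norm_scal_real, Rabs_right in U.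
      2: left; apply Rinv_0_lt_compat; auto.
      apply (Rmult_le_compat_r (hnorm y)) in U; [|lra].
      rewrite Rmult_comm, <- Rmult_assoc, Rinv_r, Rmult_1_l in U; lra. }
  assert (r2 : forall eta, 0 < eta -> exists y, hnorm y <= 1 /\ r - eta < hnorm (R y)).
  { intros eta Heta. apply NNPP. intro N.
    assert (r <= r - eta). { apply Hlub. intros q [y [Hy ->]]. apply Rnot_lt_le. intro L. apply N. exists y. auto. }
    lra. }
  assert (r3 : hnorm x <= r * hnorm (T x)) by (rewrite <- (RT x) at 1; apply r1).
  assert (rpos : 0 < r).
  { destruct (Req_dec r 0) as [E0|E0]; [|lra]. rewrite E0 in r3. lra. }
  assert (KEY : dl * r <= 1).
  { apply Rnot_lt_le. intro Big.
    assert (Sp : ~ spectrum A (mkC (a + / r) 0)).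
    { intro S. apply hsp in S. rewrite Cabs_real_sub in S. replace (a + / r - a) with (/ r) in S by ring.
      rewrite Rabs_right in S. 2: left; apply Rinv_0_lt_compat; auto.
      apply (Rmult_le_compat_r r) in S; [|lra]. rewrite Rinv_l in S; lra. }
    assert (Sm : ~ spectrum A (mkC (a + - / r) 0)).
    { intro S. apply hsp in S. rewrite Cabs_real_sub in S. replace (a + - / r - a) with (- / r) in S by ring.
      rewrite Rabs_Ropp, Rabs_right in S. 2: left; apply Rinv_0_lt_compat; auto.
      apply (Rmult_le_compat_r r) in S; [|lra]. rewrite Rinv_l in S; lra. }
    destruct (not_spec_lower H A _ Sp) as [Kp [HKp0 HKp]].
    destruct (not_spec_lower H A _ Sm) as [Km [HKm0 HKm]].
    destruct Rlin as [Ra Rs].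
    set (MT' := MA + Rabs a).
    assert (MT0 : 0 <= MT') by (unfold MT'; pose proof (Rabs_pos a); lra).
    assert (Ty : forall y, hnorm y <= MT' * hnorm (R y)) by (intro y; rewrite <- (TR y) at 1; apply MT).
    assert (Pb : forall y, hnorm (R y) <= Kp * hnorm (hadd y (hscal (mkC (- / r) 0) (R y)))).
    { intro y. pose proof (HKp (R y)) as Q. rewrite shift_eq in Q.
      assert (TRe : hadd (A (R y)) (hscal (Copp (mkC a 0)) (R y)) = y) by exact (TR y).
      rewrite TRe in Q. exact Q. }
    assert (Qb : forall y, hnorm (R y) <= Km * hnorm (hadd y (hscal (mkC (/ r) 0) (R y)))).
    { intro y. pose proof (HKm (R y)) as Q. rewrite shift_eq in Q.
      assert (TRe : hadd (A (R y)) (hscal (Copp (mkC a 0)) (R y)) = y) by exact (TR y).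
      rewrite TRe in Q.
      replace (- - / r) with (/ r) in Q by ring. exact Q. }
    set (W := fun y => hadd y (hscal (mkC (- (/ r * / r)) 0) (R (R y)))).
    assert (WE : forall y, hadd (hadd y (hscal (mkC (- / r) 0) (R y)))
                   (hscal (mkC (/ r) 0) (R (hadd y (hscal (mkC (- / r) 0) (R y))))) = W y).
    { intro y. unfold W. rewrite Ra, Rs. veq. }
    set (K := MT' * Kp * (MT' * Km)).
    assert (K0 : 0 <= K) by (unfold K; repeat apply Rmult_le_pos; auto).
    assert (Wb : forall y, hnorm y <= K * hnorm (W y)).
    { intro y. rewrite <- WE.
      set (P := hadd y (hscal (mkC (- / r) 0) (R y))).
      pose proof (Ty y) as a1. pose proof (Pb y) as a2. fold P in a2. pose proof (Ty P) as a3.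
      pose proof (Qb P) as a4.
      apply Rle_trans with (MT' * (Kp * hnorm P)). apply Rle_trans with (1 := a1). apply Rmult_le_compat_l; auto.
      apply Rle_trans with (MT' * (Kp * (MT' * hnorm (R P)))).
      apply Rmult_le_compat_l; auto. apply Rmult_le_compat_l; auto.
      apply Rle_trans with (MT' * (Kp * (MT' * (Km * hnorm (hadd P (hscal (mkC (/ r) 0) (R P))))))).
      apply Rmult_le_compat_l; auto. apply Rmult_le_compat_l; auto. apply Rmult_le_compat_l; auto.
      unfold K. right; ring. }
    assert (Wsq : forall y, Re (hinner (W y) (W y)) <=
                 Re (hinner y y) - / r * / r * Re (hinner (R y) (R y))).
    { intro y. unfold W. expand; csimpl. rewrite (Re_sym H y (R (R y))).
      assert (E1 : Re (hinner (R y) (R y)) = Re (hinner y (R (R y)))) by (rewrite Rsa; reflexivity).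
      pose proof (norm_sq_le H H (R (R y)) (R y) r r0 (r1 (R y))).
      assert (0 <= / r * / r * / r * / r) by (assert (0 < / r) by (apply Rinv_0_lt_compat; auto); nra).
      assert (/ r * / r * / r * / r * Re (hinner (R (R y)) (R (R y))) <= / r * / r * Re (hinner (R y) (R y))).
      { apply Rle_trans with (/ r * / r * / r * / r * (r * r * Re (hinner (R y) (R y)))).
        apply Rmult_le_compat_l; auto. right. field. lra. }
      rewrite E1 in *. set (u := / r * / r) in *. set (P1 := Re (hinner (R (R y)) (R (R y)))) in *.
      set (P2 := Re (hinner y (R (R y)))) in *.
      assert (H3 : u * u * P1 <= u * P2) by (replace (u * u) with (u * / r * / r) by (unfold u; ring); exact H2).
      ring_simplify. lra. }
    set (th := / (2 * (1 + K * K))).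
    assert (th0 : 0 < th) by (unfold th; apply Rinv_0_lt_compat; nra).
    assert (th1 : th * (2 * (1 + K * K)) = 1) by (unfold th; field; nra).
    destruct (r2 (r * th)) as [y [Hy1 Hy2]]. apply Rmult_lt_0_compat; auto.
    assert (thl : th <= 1 / 2) by nra.
    pose proof (r1 y) as Ry.
    pose proof (hnorm_sq H y) as Ny. pose proof (hnorm_sq H (R y)) as NRy.
    simpl in Ny, NRy. rewrite Rmult_1_r in Ny, NRy.
    pose proof (hnorm_nonneg H y). pose proof (hnorm_nonneg H (R y)).
    set (q := 1 - th) in *.
    assert (q0 : 0 < r * q) by (unfold q; nra).
    assert (A1 : r * q < hnorm (R y)) by (unfold q; lra).
    assert (A2 : r * q * (r * q) < Re (hinner (R y) (R y))) by nra.
    assert (A3 : q * q < Re (hinner y y)).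
    { assert (hnorm (R y) * hnorm (R y) <= r * hnorm y * (r * hnorm y)) by nra. nra. }
    assert (A4 : Re (hinner y y) <= 1) by nra.
    assert (A5 : / r * / r * Re (hinner (R y) (R y)) > q * q).
    { apply Rmult_lt_compat_l with (r := / r * / r) in A2.
      replace (/ r * / r * (r * q * (r * q))) with (q * q) in A2 by (field; lra). lra.
      assert (0 < / r) by (apply Rinv_0_lt_compat; auto); nra. }
    pose proof (norm_sq_le H H y (W y) K K0 (Wb y)) as A6.
    pose proof (Wsq y) as A7.
    assert (A8 : Re (hinner (W y) (W y)) < 1 - q * q) by lra.
    assert (A9 : q * q < K * K * (1 - q * q)) by nra.
    unfold q in A9. nra.
  }
  apply Rle_trans with (dl * (r * hnorm (T x))).
  - apply Rmult_le_compat_l; lra.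
  - pose proof (hnorm_nonneg H (T x)). nra.
Qed.


Lemma sqrt_tri (p q r s : R) : sqrt ((p - q) ^ 2 + (r - s) ^ 2) <= sqrt (p ^ 2 + r ^ 2) + sqrt (q ^ 2 + s ^ 2).
Proof.
  assert (Ha : 0 <= p ^ 2 + r ^ 2) by nra. assert (Hb : 0 <= q ^ 2 + s ^ 2) by nra.
  pose proof (sqrt_pos (p ^ 2 + r ^ 2)). pose proof (sqrt_pos (q ^ 2 + s ^ 2)).
  rewrite <- (sqrt_square (sqrt (p ^ 2 + r ^ 2) + sqrt (q ^ 2 + s ^ 2))) by lra.
  apply sqrt_le_1_alt.
  assert (E : sqrt (p ^ 2 + r ^ 2) * sqrt (q ^ 2 + s ^ 2) = sqrt ((p ^ 2 + r ^ 2) * (q ^ 2 + s ^ 2))) by (rewrite sqrt_mult; auto).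
  assert (C : - (p * q + r * s) <= sqrt ((p ^ 2 + r ^ 2) * (q ^ 2 + s ^ 2))).
  { apply Rle_trans with (Rabs (p * q + r * s)). rewrite <- Rabs_Ropp. apply RRle_abs.
    rewrite <- sqrt_Rsqr_abs. apply sqrt_le_1_alt. unfold Rsqr.
    assert ((p ^ 2 + r ^ 2) * (q ^ 2 + s ^ 2) - (p * q + r * s) * (p * q + r * s) = (p * s - r * q) * (p * s - r * q)) by ring.
    pose proof (Rle_0_sqr (p * s - r * q)). unfold Rsqr in *. lra. }
  pose proof (sqrt_sqrt _ Ha). pose proof (sqrt_sqrt _ Hb).
  assert ((p - q) ^ 2 + (r - s) ^ 2 = (p ^ 2 + r ^ 2) + (q ^ 2 + s ^ 2) - 2 * (p * q + r * s)) by ring.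
  nra.
Qed.

Lemma Cabs_tri (u v w : Cplx) : Cabs (Csub u w) <= Cabs (Csub u v) + Cabs (Csub w v).
Proof.
  destruct u as [u1 u2], v as [v1 v2], w as [w1 w2]. unfold Cabs, Csub, Cadd, Copp; simpl.
  pose proof (sqrt_tri (u1 - v1) (w1 - v1) (u2 - v2) (w2 - v2)).
  replace (u1 - v1 - (w1 - v1)) with (u1 + - w1) in H by ring.
  replace (u2 - v2 - (w2 - v2)) with (u2 + - w2) in H by ring.
  replace (u1 - v1) with (u1 + - v1) in H by ring. replace (u2 - v2) with (u2 + - v2) in H by ring.
  replace (w1 - v1) with (w1 + - v1) in H by ring. replace (w2 - v2) with (w2 + - v2) in H by ring.
  exact H.
Qed.

Lemma gap (H0 H1 : Hilbert) (A0 : H0 -> H0) (A1 : H1 -> H1) (d : R)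
  (hd : is_dist (spectrum A0) (spectrum A1) d) (a : R) :
  (forall mu, spectrum A0 mu -> d / 2 <= Cabs (Csub mu (mkC a 0))) \/
  (forall mu, spectrum A1 mu -> d / 2 <= Cabs (Csub mu (mkC a 0))).
Proof.
  apply NNPP. intro N. apply not_or_and in N. destruct N as [N0 N1].
  apply not_all_ex_not in N0. destruct N0 as [m0 N0].
  apply not_all_ex_not in N1. destruct N1 as [m1 N1].
  apply imply_to_and in N0. apply imply_to_and in N1.
  destruct N0 as [S0 L0]. destruct N1 as [S1 L1].
  apply Rnot_le_lt in L0. apply Rnot_le_lt in L1.
  destruct hd as [hd _]. specialize (hd m0 m1 S0 S1).
  pose proof (Cabs_tri m0 (mkC a 0) m1). lra.
Qed.


Lemma sqrt_add_le (a b : R) : 0 <= a -> 0 <= b -> sqrt (a + b) <= sqrt a + sqrt b.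
Proof.
  intros Ha Hb. pose proof (sqrt_pos a). pose proof (sqrt_pos b).
  rewrite <- (sqrt_square (sqrt a + sqrt b)) by lra. apply sqrt_le_1_alt.
  pose proof (sqrt_sqrt a Ha). pose proof (sqrt_sqrt b Hb). nra.
Qed.

Lemma small_inv (k : R) : 0 < k -> exists N : nat, forall n, (N <= n)%nat -> / (INR n + 1) < k.
Proof.
  intro Hk. destruct (archimed (/ k)) as [Hu _].
  assert (0 <= IZR (up (/ k))). { pose proof (Rinv_0_lt_compat k Hk). lra. }
  exists (Z.to_nat (up (/ k))). intros n Hn.
  apply le_INR in Hn. rewrite INR_IZR_INZ, Z2Nat.id in Hn.
  2: { apply le_IZR. auto. }
  assert (/ k < INR n + 1) by lra.
  assert (0 < / k) by (apply Rinv_0_lt_compat; auto).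
  apply Rinv_lt_contravar in H0; [|nra]. rewrite Rinv_inv in H0. exact H0.
Qed.

Lemma lin_sub (H K : Hilbert) (f : H -> K) (a b : H) : is_linear f -> f (hadd a (hopp b)) = hadd (f a) (hopp (f b)).
Proof. intro L. pose proof L as [La _]. rewrite La, lin_opp; auto. Qed.

Lemma surj (H : Hilbert) (T : H -> H) (Tlin : is_linear T) (M : R) (HM0 : 0 <= M)
  (HM : forall x, hnorm (T x) <= M * hnorm x) (c : R) (hc : 0 < c)
  (Hlow : forall x, c * hnorm x <= hnorm (T x))
  (Horth : forall e, (forall x, Re (hinner (T x) e) = 0) -> e = hzero) :
  forall y, exists x, T x = y.
Proof.
  intro y. pose proof Tlin as [Ta Ts].
  set (D := fun x => Re (hinner (hadd y (hopp (T x))) (hadd y (hopp (T x))))).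
  set (E := fun q => exists x, q = - D x).
  assert (Eb : bound E). { exists 0. intros q [x ->]. pose proof (nsq_nonneg H (hadd y (hopp (T x)))). unfold D. lra. }
  assert (Ene : exists q, E q) by (exists (- D hzero); exists hzero; reflexivity).
  destruct (completeness E Eb Ene) as [m [Hub Hlub]].
  set (g := - m).
  assert (g1 : forall x, g <= D x). { intro x. assert (- D x <= m) by (apply Hub; exists x; auto). unfold g; lra. }
  assert (g2 : forall eta, 0 < eta -> exists x, D x < g + eta).
  { intros eta He. apply NNPP. intro N.
    assert (m <= m - eta). { apply Hlub. intros q [x ->]. apply Rnot_lt_le. intro L. apply N. exists x. unfold g. lra. }
    lra. }
  assert (g0 : 0 <= g).
  { assert (m <= 0). { apply Hlub. intros q [x ->]. pose proof (nsq_nonneg H (hadd y (hopp (T x)))). unfold D. lra. }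
    unfold g; lra. }
  assert (Ex : forall n : nat, exists x, D x < g + / (INR n + 1)).
  { intro n. apply g2. apply Rinv_0_lt_compat. pose proof (pos_INR n). lra. }
  set (xs := fun n => proj1_sig (constructive_indefinite_description _ (Ex n))).
  assert (Hxs : forall n, D (xs n) < g + / (INR n + 1)).
  { intro n. unfold xs. destruct (constructive_indefinite_description _ (Ex n)). simpl. auto. }
  (* parallelogram *)
  assert (Par : forall n k, Re (hinner (hadd (T (xs n)) (hopp (T (xs k)))) (hadd (T (xs n)) (hopp (T (xs k)))))
                 <= 2 * D (xs n) + 2 * D (xs k) - 4 * g).
  { intros n k. pose proof (g1 (hscal (mkC (/ 2) 0) (hadd (xs n) (xs k)))) as G.
    unfold D in *. rewrite Ts, Ta in G. expand_in G. csimpl. expand. csimpl.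
    ring_simplify. ring_simplify in G. lra. }
  assert (Low2 : forall x, c * c * Re (hinner x x) <= Re (hinner (T x) (T x))).
  { intro x. rewrite <- !hnorm_sq. pose proof (Hlow x). pose proof (hnorm_nonneg H x).
    assert (0 <= c * hnorm x) by nra.
    assert (c * hnorm x * (c * hnorm x) <= hnorm (T x) * hnorm (T x)) by (apply Rmult_le_compat; lra).
    simpl. lra. }
  assert (Cau : forall eps, 0 < eps -> exists N, forall n k, (N <= n)%nat -> (N <= k)%nat ->
             hnorm (hadd (xs n) (hopp (xs k))) < eps).
  { intros eps He. destruct (small_inv (c * c * (eps * eps) / 8)) as [N HN].
    { apply Rmult_lt_0_compat; [|lra]. apply Rmult_lt_0_compat; nra. }
    exists N. intros n k Hn Hk. pose proof (HN n Hn). pose proof (HN k Hk).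
    pose proof (Par n k). pose proof (Hxs n). pose proof (Hxs k).
    pose proof (Low2 (hadd (xs n) (hopp (xs k)))) as L. rewrite lin_sub in L by auto.
    assert (Q : Re (hinner (hadd (xs n) (hopp (xs k))) (hadd (xs n) (hopp (xs k)))) < eps * eps).
    { assert (c * c * Re (hinner (hadd (xs n) (hopp (xs k))) (hadd (xs n) (hopp (xs k)))) < c * c * (eps * eps)).
      { set (kk := c * c * (eps * eps)) in *. set (Y := c * c * Re (hinner (hadd (xs n) (hopp (xs k))) (hadd (xs n) (hopp (xs k))))) in *.
        assert (0 < kk) by (unfold kk; apply Rmult_lt_0_compat; nra). lra. }
      apply Rmult_lt_reg_l with (c * c); [nra | lra]. }
    unfold hnorm. rewrite <- (sqrt_square eps) by lra. apply sqrt_lt_1_alt. split; auto. apply nsq_nonneg. }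
  destruct (hcomplete H xs Cau) as [l Hl].
  assert (Dl : D l <= g).
  { apply Rnot_lt_le. intro Big.
    set (rho := hnorm (hadd y (hopp (T l))) - sqrt g).
    assert (rho0 : 0 < rho).
    { unfold rho, hnorm. assert (sqrt g < sqrt (D l)) by (apply sqrt_lt_1_alt; lra). unfold D in H0. lra. }
    destruct (small_inv (rho * rho / 4)) as [N1 HN1]. nra.
    destruct (Hl (rho / (2 * (M + 1)))) as [N2 HN2].
    { apply Rdiv_lt_0_compat; lra. }
    set (n := max N1 N2).
    specialize (HN1 n (Nat.le_max_l _ _)). specialize (HN2 n (Nat.le_max_r _ _)).
    pose proof (Hxs n) as Dn.
    change (hnorm (hadd (xs n) (hopp l)) < rho / (2 * (M + 1))) in HN2.
    assert (Tri : hnorm (hadd y (hopp (T l))) <= hnorm (hadd y (hopp (T (xs n)))) + hnorm (T (hadd (xs n) (hopp l)))).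
    { rewrite lin_sub by auto. eapply Rle_trans; [|apply norm_triangle]. right. f_equal. veq. }
    assert (S1 : hnorm (hadd y (hopp (T (xs n)))) < sqrt g + rho / 2).
    { unfold hnorm. apply Rle_lt_trans with (sqrt (g + / (INR n + 1))).
      apply sqrt_le_1_alt. unfold D in Dn. lra.
      assert (0 < / (INR n + 1)) by (apply Rinv_0_lt_compat; pose proof (pos_INR n); lra).
      eapply Rle_lt_trans. apply sqrt_add_le; lra.
      apply Rplus_lt_compat_l. rewrite <- (sqrt_square (rho / 2)) by lra. apply sqrt_lt_1_alt. split. lra. lra. }
    assert (S2 : hnorm (T (hadd (xs n) (hopp l))) < rho / 2).
    { eapply Rle_lt_trans. apply HM.
      pose proof (hnorm_nonneg H (hadd (xs n) (hopp l))).
      apply Rle_lt_trans with ((M + 1) * hnorm (hadd (xs n) (hopp l))). nra.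
      replace (rho / 2) with ((M + 1) * (rho / (2 * (M + 1)))) by (field; lra).
      apply Rmult_lt_compat_l; lra. }
    unfold rho in *. lra. }
  set (e := hadd y (hopp (T l))).
  assert (Or : forall x, Re (hinner (T x) e) = 0).
  { intro x. set (p := Re (hinner (T x) e)). set (q := Re (hinner (T x) (T x))).
    assert (Q : forall t, 0 <= 0 + 2 * t * (- p) + t * t * q).
    { intro t. pose proof (g1 (hadd l (hscal (mkC t 0) x))) as G. unfold D in G, Dl.
      rewrite Ta, Ts in G. unfold p, q, e. expand_in G. expand_in Dl. expand. csimpl.
      rewrite ?(Re_sym H y (T l)), ?(Re_sym H y (T x)), ?(Re_sym H (T l) (T x)) in *.
      ring_simplify. ring_simplify in G. ring_simplify in Dl. lra. }
    apply quad_disc in Q. nra. apply nsq_nonneg. }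
  apply Horth in Or. exists l. apply eq_by_nsq.
  assert (Z : Re (hinner e e) = 0) by (rewrite Or, inner_0l; reflexivity).
  unfold e in Z. expand_in Z. expand. csimpl. rewrite ?(Re_sym H y (T l)) in *. lra.
Qed.

Lemma inj_lower (H : Hilbert) (T : H -> H) (Tlin : is_linear T) (c : R) (hc : 0 < c)
  (Hlow : forall x, c * hnorm x <= hnorm (T x)) (u v : H) : T u = T v -> u = v.
Proof.
  intro E. pose proof (Hlow (hadd u (hopp v))) as L. rewrite lin_sub, E in L by auto.
  assert (Z : hadd (T v) (hopp (T v)) = hzero) by apply hadd_opp. rewrite Z, norm_zero in L.
  pose proof (hnorm_nonneg H (hadd u (hopp v))).
  assert (N : hnorm (hadd u (hopp v)) = 0) by nra.
  apply norm_zero_inv in N. apply eq_by_nsq. rewrite N, inner_0l. reflexivity.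
Qed.

Lemma norm_scal_gen (H : Hilbert) (a : Cplx) (x : H) : hnorm (hscal a x) = sqrt (Re a * Re a + Im a * Im a) * hnorm x.
Proof. unfold hnorm. rewrite nsq_scal, sqrt_mult; auto. nra. apply nsq_nonneg. Qed.


Ltac cgen := repeat match goal with |- context [@hinner ?K ?a ?b] =>
  let z := fresh "z" in generalize (@hinner K a b) as z; intro z end.
Ltac pd := repeat match goal with p : (_ * _)%type |- _ => destruct p end.

Definition PH (H0 H1 : Hilbert) : Hilbert.
Proof.
  refine (@Build_Hilbert (H0 * H1) (hzero, hzero) sadd (fun x => (hopp (fst x), hopp (snd x))) sscal
    (fun x y => Cadd (hinner (fst x) (fst y)) (hinner (snd x) (snd y))) _ _ _ _ _ _ _ _ _ _ _ _ _ _).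
  - intros; pd; unfold sadd; simpl; f_equal; apply hadd_assoc.
  - intros; pd; unfold sadd; simpl; f_equal; apply hadd_comm.
  - intros; pd; unfold sadd; simpl; f_equal; apply hadd_0.
  - intros; pd; unfold sadd; simpl; f_equal; apply hadd_opp.
  - intros; pd; unfold sscal; simpl; f_equal; apply hscal_1.
  - intros; pd; unfold sscal; simpl; f_equal; apply hscal_assoc.
  - intros; pd; unfold sscal, sadd; simpl; f_equal; apply hscal_addv.
  - intros; pd; unfold sscal, sadd; simpl; f_equal; apply hscal_adds.
  - intros; pd; unfold sadd; simpl. rewrite !hinner_add.
    cgen. unfold Cadd; simpl. apply Cext; ring.
  - intros; pd; unfold sscal; simpl. rewrite !hinner_scal.
    cgen. unfold Cadd, Cmul; simpl. apply Cext; ring.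
  - intros [a0 a1] [b0 b1]; simpl. rewrite (hinner_conj _ b0 a0), (hinner_conj _ b1 a1).
    cgen. unfold Cadd, Cconj; simpl. apply Cext; ring.
  - intros; pd; simpl. pose proof (nsq_nonneg _ h); pose proof (nsq_nonneg _ h0). lra.
  - intros; pd; simpl in *. pose proof (nsq_nonneg _ h); pose proof (nsq_nonneg _ h0).
    assert (E1 : Re (Cadd (hinner h h) (hinner h0 h0)) = 0) by (rewrite H; reflexivity).
    simpl in E1. f_equal; apply nsq_zero; lra.
  - intros u Hu.
    assert (C0' : forall eps, 0 < eps -> exists N, forall m n, (N <= m)%nat -> (N <= n)%nat ->
        hnorm (hadd (fst (u m)) (hopp (fst (u n)))) < eps).
    { intros eps He. destruct (Hu eps He) as [N HN]. exists N. intros m n Hm Hn. specialize (HN m n Hm Hn).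
      eapply Rle_lt_trans; [|exact HN]. apply sqrt_le_1_alt. destruct (u m) as [p0 p1], (u n) as [q0 q1]; simpl. unfold sadd; simpl.
      pose proof (nsq_nonneg _ (hadd p1 (hopp q1))). pose proof (nsq_nonneg _ (hadd p0 (hopp q0))). lra. }
    assert (C1' : forall eps, 0 < eps -> exists N, forall m n, (N <= m)%nat -> (N <= n)%nat ->
        hnorm (hadd (snd (u m)) (hopp (snd (u n)))) < eps).
    { intros eps He. destruct (Hu eps He) as [N HN]. exists N. intros m n Hm Hn. specialize (HN m n Hm Hn).
      eapply Rle_lt_trans; [|exact HN]. apply sqrt_le_1_alt. destruct (u m) as [p0 p1], (u n) as [q0 q1]; simpl. unfold sadd; simpl.
      pose proof (nsq_nonneg _ (hadd p1 (hopp q1))). pose proof (nsq_nonneg _ (hadd p0 (hopp q0))). lra. }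
    destruct (hcomplete H0 (fun n => fst (u n)) C0') as [l0 L0].
    destruct (hcomplete H1 (fun n => snd (u n)) C1') as [l1 L1].
    exists (l0, l1). intros eps He.
    destruct (L0 (eps / 2)) as [N0 HN0]; [lra|]. destruct (L1 (eps / 2)) as [N1 HN1]; [lra|].
    exists (max N0 N1). intros n Hn.
    specialize (HN0 n (Nat.le_trans _ _ _ (Nat.le_max_l _ _) Hn)).
    specialize (HN1 n (Nat.le_trans _ _ _ (Nat.le_max_r _ _) Hn)).
    simpl in HN0, HN1. destruct (u n) as [a0 a1]; simpl in *.
    eapply Rle_lt_trans. apply sqrt_add_le; apply nsq_nonneg. lra.
Defined.

Lemma PH_norm (H0 H1 : Hilbert) (x : PH H0 H1) : @hnorm (PH H0 H1) x = snorm x.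
Proof.
  destruct x as [x0 x1]. unfold snorm. rewrite !hnorm_sq. reflexivity.
Qed.


Lemma RL (b dl tau s t F : R) : 0 <= b -> b < dl -> 0 < tau -> 0 <= s -> 0 <= t -> 0 <= F ->
  dl * s - b * t <= F -> tau * (t * t - s * s) <= F * (s + t) -> tau * (s * s - t * t) <= F * (s + t) ->
  (dl - b) * tau / (2 * (tau + b + dl)) * (s + t) <= F.
Proof.
  intros. assert (P : 0 < tau + b + dl) by lra.
  apply Rmult_le_reg_r with (2 * (tau + b + dl)); [lra|].
  replace ((dl - b) * tau / (2 * (tau + b + dl)) * (s + t) * (2 * (tau + b + dl))) with ((dl - b) * tau * (s + t)) by (field; lra).
  destruct (Rle_lt_dec t s).
  -
    assert ((dl - b) * s <= F) by nra.
    assert ((dl - b) * tau * (s + t) <= (dl - b) * tau * (2 * s)) by (apply Rmult_le_compat_l; nra).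
    assert ((dl - b) * tau * (2 * s) <= F * tau * 2) by nra.
    nra.
  - assert (tau * (t - s) <= F).
    { destruct (Req_dec (s + t) 0). lra.
      assert (tau * (t - s) * (s + t) <= F * (s + t)) by (replace (tau * (t - s) * (s + t)) with (tau * (t * t - s * s)) by ring; lra).
      apply Rmult_le_reg_r with (s + t); lra. }
    assert (Hs : (dl - b) * s * tau <= F * (tau + b)) by nra.
    assert (E : (dl - b) * tau * (s + t) = 2 * ((dl - b) * s * tau) + (dl - b) * (tau * (t - s))) by ring.
    rewrite E.
    assert ((dl - b) * (tau * (t - s)) <= (dl - b) * F) by (apply Rmult_le_compat_l; lra).
    nra.
Qed.

Lemma pyth (H : Hilbert) (A : H -> H) (Asa : forall x y, hinner (A x) y = hinner x (A y)) (a tau : R) (x : H) :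
  Re (hinner (hadd (A x) (hscal (Copp (mkC a 0)) x)) (hadd (A x) (hscal (Copp (mkC a 0)) x))) <=
  Re (hinner (hadd (A x) (hscal (Copp (mkC a tau)) x)) (hadd (A x) (hscal (Copp (mkC a tau)) x))).
Proof.
  expand. csimpl. rewrite (Im_sym H (A x) x), (Im_sa H A x Asa), (Im_self H x).
  pose proof (nsq_nonneg H x). nra.
Qed.

Lemma sq_to_norm (H : Hilbert) (u v : H) : Re (hinner u u) <= Re (hinner v v) -> hnorm u <= hnorm v.
Proof. intro. unfold hnorm. apply sqrt_le_1_alt. auto. Qed.

Lemma snorm_fst (H0 H1 : Hilbert) (x : H0 * H1) : hnorm (fst x) <= snorm x.
Proof.
  unfold snorm. rewrite <- (sqrt_pow2 (hnorm (fst x))) at 1 by apply hnorm_nonneg.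
  apply sqrt_le_1_alt. pose proof (pow2_ge_0 (hnorm (snd x))). lra.
Qed.

Lemma snorm_snd (H0 H1 : Hilbert) (x : H0 * H1) : hnorm (snd x) <= snorm x.
Proof.
  unfold snorm. rewrite <- (sqrt_pow2 (hnorm (snd x))) at 1 by apply hnorm_nonneg.
  apply sqrt_le_1_alt. pose proof (pow2_ge_0 (hnorm (fst x))). lra.
Qed.

Lemma snorm_le_sum (H0 H1 : Hilbert) (x : H0 * H1) : snorm x <= hnorm (fst x) + hnorm (snd x).
Proof.
  unfold snorm. pose proof (hnorm_nonneg _ (fst x)). pose proof (hnorm_nonneg _ (snd x)).
  rewrite <- (sqrt_square (hnorm (fst x) + hnorm (snd x))) by lra. apply sqrt_le_1_alt. nra.
Qed.

Lemma snorm_pos (H0 H1 : Hilbert) (x : H0 * H1) : 0 <= snorm x.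
Proof. apply sqrt_pos. Qed.


Lemma hopp_hopp_tmp (H : Hilbert) (v : H) : hopp (hopp v) = v.
Proof. veq. Qed.

Section Main.
Variables (H0 H1 : Hilbert)
  (A0 : H0 -> H0) (A1 : H1 -> H1) (B : H1 -> H0) (Bs : H0 -> H1)
  (hA0 : bounded_selfadjoint A0) (hA1 : bounded_selfadjoint A1)
  (hB : bounded_op B) (hBs : bounded_op Bs) (hadj : is_adjoint B Bs)
  (d : R) (hd : is_dist (spectrum A0) (spectrum A1) d) (hdpos : 0 < d)
  (nV : R) (hnV : is_opnorm_sum (Vop B Bs) nV) (hV : nV < d / 2).

Lemma snorm_z0 (v : H1) : snorm ((hzero, v) : H0 * H1) = hnorm v.
Proof. unfold snorm; cbn [fst snd]. rewrite norm_zero. replace (0 ^ 2 + hnorm v ^ 2) with (hnorm v ^ 2) by ring. apply sqrt_pow2, hnorm_nonneg. Qed.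
Lemma snorm_0z (v : H0) : snorm ((v, hzero) : H0 * H1) = hnorm v.
Proof. unfold snorm; cbn [fst snd]. rewrite norm_zero. replace (hnorm v ^ 2 + 0 ^ 2) with (hnorm v ^ 2) by ring. apply sqrt_pow2, hnorm_nonneg. Qed.

Lemma nV_pos : 0 <= nV.
Proof.
  destruct hnV as [Hub _]. apply Rle_trans with (snorm (Vop B Bs (hzero, hzero))).
  apply snorm_pos. apply Hub. exists (hzero, hzero). split; auto.
  unfold snorm; cbn [fst snd Vop]. rewrite !norm_zero. replace (0 ^ 2 + 0 ^ 2) with 0 by ring. rewrite sqrt_0. lra.
Qed.

Lemma B_bound (x1 : H1) : hnorm (B x1) <= nV * hnorm x1.
Proof.
  destruct hB as [Blin _]. destruct hBs as [Bslin _].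
  destruct (Req_dec (hnorm x1) 0) as [E|E].
  { apply norm_zero_inv in E. subst. rewrite lin_zero by auto. rewrite !norm_zero. pose proof nV_pos. nra. }
  assert (P : 0 < hnorm x1) by (pose proof (hnorm_nonneg _ x1); lra).
  destruct hnV as [Hub _].
  set (y := hscal (mkC (/ hnorm x1) 0) x1).
  assert (Ny : hnorm y = 1) by (unfold y; rewrite norm_scal_real, Rabs_right; [field; lra | left; apply Rinv_0_lt_compat; auto]).
  assert (U : snorm (Vop B Bs (hzero, y)) <= nV) by (apply Hub; exists (hzero, y); split; auto; rewrite snorm_z0; lra).
  pose proof (snorm_fst H0 H1 (Vop B Bs (hzero, y))) as F. simpl in F.
  unfold y in F. destruct Blin as [_ Bsc]. rewrite Bsc, norm_scal_real, Rabs_right in F.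
  2: left; apply Rinv_0_lt_compat; auto.
  assert (HH : / hnorm x1 * hnorm (B x1) <= nV) by (eapply Rle_trans; [exact F| exact U]).
  apply Rmult_le_compat_l with (r := hnorm x1) in HH; [|lra].
  rewrite <- Rmult_assoc, Rinv_r, Rmult_1_l in HH; lra.
Qed.

Lemma Bs_bound (x0 : H0) : hnorm (Bs x0) <= nV * hnorm x0.
Proof.
  destruct hB as [Blin _]. destruct hBs as [Bslin _].
  destruct (Req_dec (hnorm x0) 0) as [E|E].
  { apply norm_zero_inv in E. subst. rewrite lin_zero by auto. rewrite !norm_zero. pose proof nV_pos. nra. }
  assert (P : 0 < hnorm x0) by (pose proof (hnorm_nonneg _ x0); lra).
  destruct hnV as [Hub _].
  set (y := hscal (mkC (/ hnorm x0) 0) x0).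
  assert (Ny : hnorm y = 1) by (unfold y; rewrite norm_scal_real, Rabs_right; [field; lra | left; apply Rinv_0_lt_compat; auto]).
  assert (U : snorm (Vop B Bs (y, hzero)) <= nV) by (apply Hub; exists (y, hzero); split; auto; rewrite snorm_0z; lra).
  pose proof (snorm_snd H0 H1 (Vop B Bs (y, hzero))) as F. simpl in F. rewrite norm_opp in F.
  unfold y in F. destruct Bslin as [_ Bsc]. rewrite Bsc, norm_scal_real, Rabs_right in F.
  2: left; apply Rinv_0_lt_compat; auto.
  assert (HH : / hnorm x0 * hnorm (Bs x0) <= nV) by (eapply Rle_trans; [exact F| exact U]).
  apply Rmult_le_compat_l with (r := hnorm x0) in HH; [|lra].
  rewrite <- Rmult_assoc, Rinv_r, Rmult_1_l in HH; lra.
Qed.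

Definition Tz (z : Cplx) (x : PH H0 H1) : PH H0 H1 := sadd (Lop A0 A1 B Bs x) (sscal (Copp z) x).

Lemma Tz_lower (z : Cplx) (hz : Im z <> 0) :
  exists c, 0 < c /\ forall x, c * @hnorm (PH H0 H1) x <= @hnorm (PH H0 H1) (Tz z x).
Proof.
  destruct z as [a tau]. simpl in hz.
  pose proof nV_pos as b0.
  set (dl := d / 2). set (b := nV). set (ta := Rabs tau).
  assert (ta0 : 0 < ta) by (unfold ta; apply Rabs_pos_lt; auto).
  assert (bd : b < dl) by (unfold b, dl; lra). assert (b0b : 0 <= b) by (unfold b; lra).
  exists ((dl - b) * ta / (2 * (ta + b + dl))). split.
  { apply Rdiv_lt_0_compat; [apply Rmult_lt_0_compat|]; lra. }
  intros [x0 x1]. rewrite !PH_norm.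
  set (z := mkC a tau).
  set (f0 := hadd (hadd (A0 x0) (B x1)) (hscal (Copp z) x0)).
  set (f1 := hadd (hadd (hopp (Bs x0)) (A1 x1)) (hscal (Copp z) x1)).
  assert (Ef : Tz z (x0, x1) = (f0, f1)) by reflexivity. rewrite Ef.
  set (s := hnorm x0). set (t := hnorm x1). set (F := snorm ((f0, f1) : H0 * H1)).
  assert (s0 : 0 <= s) by apply hnorm_nonneg. assert (t0 : 0 <= t) by apply hnorm_nonneg.
  assert (F0F : hnorm f0 <= F) by apply (snorm_fst H0 H1 (f0, f1)).
  assert (F1F : hnorm f1 <= F) by apply (snorm_snd H0 H1 (f0, f1)).
  pose proof (hnorm_nonneg _ f0). pose proof (hnorm_nonneg _ f1).
  assert (Xs : snorm ((x0, x1) : H0 * H1) <= s + t) by apply (snorm_le_sum H0 H1 (x0, x1)).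
  destruct hA0 as [[A0lin _] A0sa]. destruct hA1 as [[A1lin _] A1sa].
  set (i := mkC 0 1).
  assert (Iid : Re (hinner f0 (hscal i x0)) - Re (hinner f1 (hscal i x1)) =
                tau * (Re (hinner x1 x1) - Re (hinner x0 x0))).
  { unfold f0, f1, i, z. expand. csimpl.
    rewrite (hadj x1 x0). rewrite (Im_sym H1 (Bs x0) x1).
    rewrite (Im_sa H0 A0 x0 A0sa), (Im_sa H1 A1 x1 A1sa), (Im_self H0 x0), (Im_self H1 x1). ring. }
  assert (Ci0 : Rabs (Re (hinner f0 (hscal i x0))) <= hnorm f0 * s).
  { eapply Rle_trans. apply ri_cs_abs. rewrite norm_scal_unit. right; reflexivity. unfold i; simpl; ring. }
  assert (Ci1 : Rabs (Re (hinner f1 (hscal i x1))) <= hnorm f1 * t).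
  { eapply Rle_trans. apply ri_cs_abs. rewrite norm_scal_unit. right; reflexivity. unfold i; simpl; ring. }
  rewrite <- (hnorm_sq H0 x0), <- (hnorm_sq H1 x1) in Iid. fold s t in Iid. simpl in Iid.
  assert (IB : ta * (t * t - s * s) <= F * (s + t) /\ ta * (s * s - t * t) <= F * (s + t)).
  { assert (hnorm f0 * s <= F * s) by (apply Rmult_le_compat_r; auto).
    assert (hnorm f1 * t <= F * t) by (apply Rmult_le_compat_r; auto).
    revert Ci0 Ci1. unfold ta. unfold Rabs; repeat destruct Rcase_abs; intros; split; nra. }
  destruct IB as [IB1 IB2].
  assert (SC : (dl - b) * ta / (2 * (ta + b + dl)) * snorm ((x0, x1) : H0 * H1) <=
               (dl - b) * ta / (2 * (ta + b + dl)) * (s + t)).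
  { apply Rmult_le_compat_l; auto. left. apply Rdiv_lt_0_compat; [apply Rmult_lt_0_compat|]; lra. }
  apply Rle_trans with (1 := SC).
  pose proof (snorm_pos H0 H1 (f0, f1)). fold F in H2.
  destruct (gap H0 H1 A0 A1 d hd a) as [G|G].
  - assert (L1 : dl * s <= hnorm (hadd (A0 x0) (hscal (Copp z) x0))).
    { eapply Rle_trans. apply (sa_lower H0 A0 hA0 a dl); [unfold dl; lra | exact G].
      apply sq_to_norm. apply pyth; auto. }
    assert (L2 : hnorm (hadd (A0 x0) (hscal (Copp z) x0)) <= hnorm f0 + b * t).
    { replace (hadd (A0 x0) (hscal (Copp z) x0)) with (hadd f0 (hopp (B x1))) by (unfold f0; veq).
      eapply Rle_trans. apply norm_triangle. rewrite norm_opp. pose proof (B_bound x1). unfold b, t. lra. }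
    apply RL; auto; lra.
  - assert (L1 : dl * t <= hnorm (hadd (A1 x1) (hscal (Copp z) x1))).
    { eapply Rle_trans. apply (sa_lower H1 A1 hA1 a dl); [unfold dl; lra | exact G].
      apply sq_to_norm. apply pyth; auto. }
    assert (L2 : hnorm (hadd (A1 x1) (hscal (Copp z) x1)) <= hnorm f1 + b * s).
    { replace (hadd (A1 x1) (hscal (Copp z) x1)) with (hadd f1 (Bs x0)) by (unfold f1; veq).
      eapply Rle_trans. apply norm_triangle. pose proof (Bs_bound x0). unfold b, s. lra. }
    rewrite (Rplus_comm s t). apply RL; auto; try lra.
Qed.

Lemma adj' (y : H0) (x : H1) : hinner (Bs y) x = hinner y (B x).
Proof. rewrite hinner_conj, <- hadj, <- hinner_conj. reflexivity. Qed.

Lemma Tz_orth (z : Cplx) (hz : Im z <> 0) (e : PH H0 H1) :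
  (forall x, Re (hinner (Tz z x) e) = 0) -> e = hzero.
Proof.
  intro Ho. destruct z as [a tau]. simpl in hz.
  destruct (Tz_lower (mkC a (- tau))) as [c [c0 Hc]]. simpl; lra.
  destruct e as [e0 e1].
  destruct hA0 as [[A0lin _] A0sa]. destruct hA1 as [[A1lin _] A1sa].
  destruct hB as [Blin _].
  set (w := Tz (mkC a (- tau)) (e0, hopp e1)).
  set (g := ((fst w, hopp (snd w)) : PH H0 H1)).
  assert (Id : forall x, Re (hinner (Tz (mkC a tau) x) (e0, e1)) = Re (hinner x g)).
  { intros [x0 x1]. unfold g, w, Tz, Lop, sadd, sscal. cbn [fst snd hinner PH].
    rewrite (lin_opp _ _ B e1), (lin_opp _ _ A1 e1) by auto.
    expand. rewrite (A0sa x0 e0), (hadj x1 e0), (adj' x0 e1), (A1sa x1 e1). csimpl. ring. }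
  assert (Zg : Re (hinner g g) = 0) by (rewrite <- Id; apply Ho).
  assert (Zw : @hnorm (PH H0 H1) w = 0).
  { unfold hnorm. rewrite <- sqrt_0. f_equal. rewrite <- Zg. unfold g. destruct w as [w0 w1].
    cbn [fst snd hinner PH]. expand. csimpl. ring. }
  specialize (Hc (e0, hopp e1)). fold w in Hc. rewrite Zw in Hc.
  assert (Ze : @hnorm (PH H0 H1) (e0, hopp e1) = 0).
  { pose proof (hnorm_nonneg (PH H0 H1) (e0, hopp e1)). nra. }
  apply norm_zero_inv in Ze. injection Ze as E0 E1.
  subst e0. assert (e1 = hzero). { rewrite <- (hopp_hopp_tmp _ e1). rewrite E1. apply eq_by_nsq. expand. csimpl. ring. }
  subst. reflexivity.
Qed.

Lemma Tz_lin (z : Cplx) : @is_linear (PH H0 H1) (PH H0 H1) (Tz z).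
Proof.
  destruct hA0 as [[[A0a A0s] _] _]. destruct hA1 as [[[A1a A1s] _] _].
  destruct hB as [[Ba Bsc] _]. destruct hBs as [[Bsa Bss] _].
  split.
  - intros [x0 x1] [y0 y1]. unfold Tz, Lop, sadd, sscal. cbn [fst snd hadd PH].
    unfold sadd; cbn [fst snd]. rewrite A0a, A1a, Ba, Bsa. f_equal; veq.
  - intros a [x0 x1]. unfold Tz, Lop, sadd, sscal. cbn [fst snd hscal PH].
    unfold sscal; cbn [fst snd]. rewrite A0s, A1s, Bsc, Bss. f_equal; apply eq_by_nsq; expand; csimpl;
    repeat match goal with |- context [@hinner ?K ?p ?q] =>
      let zz := fresh "zz" in generalize (@hinner K p q) as zz; intro zz end;
    destruct a, z; simpl; ring.
Qed.

Lemma Tz_bd (z : Cplx) : exists M, 0 <= M /\ forall x, @hnorm (PH H0 H1) (Tz z x) <= M * @hnorm (PH H0 H1) x.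
Proof.
  destruct hA0 as [[_ A0b] _]. destruct hA1 as [[_ A1b] _].
  destruct hB as [_ Bb]. destruct hBs as [_ Bsb].
  destruct (bound_abs _ _ _ A0b) as [M0 [M00 HM0]].
  destruct (bound_abs _ _ _ A1b) as [M1 [M10 HM1]].
  destruct (bound_abs _ _ _ Bb) as [M2 [M20 HM2]].
  destruct (bound_abs _ _ _ Bsb) as [M3 [M30 HM3]].
  set (k := sqrt (Re (Copp z) * Re (Copp z) + Im (Copp z) * Im (Copp z))).
  assert (k0 : 0 <= k) by apply sqrt_pos.
  exists (M0 + M1 + M2 + M3 + 2 * k). split. lra.
  intros [x0 x1]. rewrite !PH_norm.
  unfold Tz, Lop, sadd, sscal. cbn [fst snd].
  eapply Rle_trans. apply snorm_le_sum. cbn [fst snd].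
  pose proof (snorm_fst H0 H1 (x0, x1)). pose proof (snorm_snd H0 H1 (x0, x1)). cbn [fst snd] in *.
  set (X := snorm (x0, x1)) in *.
  pose proof (hnorm_nonneg _ x0). pose proof (hnorm_nonneg _ x1).
  assert (T0 : hnorm (hadd (hadd (A0 x0) (B x1)) (hscal (Copp z) x0)) <= (M0 + M2 + k) * X).
  { eapply Rle_trans. apply norm_triangle. eapply Rle_trans. apply Rplus_le_compat_r. apply norm_triangle.
    rewrite norm_scal_gen. fold k. pose proof (HM0 x0). pose proof (HM2 x1).
    assert (M0 * hnorm x0 <= M0 * X) by (apply Rmult_le_compat_l; auto).
    assert (M2 * hnorm x1 <= M2 * X) by (apply Rmult_le_compat_l; auto).
    assert (k * hnorm x0 <= k * X) by (apply Rmult_le_compat_l; auto). lra. }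
  assert (T1 : hnorm (hadd (hadd (hopp (Bs x0)) (A1 x1)) (hscal (Copp z) x1)) <= (M3 + M1 + k) * X).
  { eapply Rle_trans. apply norm_triangle. eapply Rle_trans. apply Rplus_le_compat_r. apply norm_triangle.
    rewrite norm_scal_gen, norm_opp. fold k. pose proof (HM3 x0). pose proof (HM1 x1).
    assert (M3 * hnorm x0 <= M3 * X) by (apply Rmult_le_compat_l; auto).
    assert (M1 * hnorm x1 <= M1 * X) by (apply Rmult_le_compat_l; auto).
    assert (k * hnorm x1 <= k * X) by (apply Rmult_le_compat_l; auto). lra. }
  lra.
Qed.

Lemma final : forall lam : Cplx, spectrum_sum (Lop A0 A1 B Bs) lam -> Im lam = 0.
Proof.
  intros lam Sp. destruct (Req_dec (Im lam) 0) as [E|E]; auto. exfalso. apply Sp.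
  destruct (Tz_lower lam E) as [c [c0 Hc]].
  destruct (Tz_bd lam) as [M [M0 HM]].
  pose proof (surj (PH H0 H1) (Tz lam) (Tz_lin lam) M M0 HM c c0 Hc (Tz_orth lam E)) as Su.
  set (S := fun y => proj1_sig (constructive_indefinite_description _ (Su y))).
  assert (TS : forall y, Tz lam (S y) = y).
  { intro y. unfold S. destruct (constructive_indefinite_description _ (Su y)). simpl. auto. }
  pose proof (inj_lower (PH H0 H1) (Tz lam) (Tz_lin lam) c c0 Hc) as Inj.
  pose proof (Tz_lin lam) as [La Ls].
  exists S. split; [|split; [|split; [|split]]].
  - intros x y. apply Inj. change (Tz lam (S (@hadd (PH H0 H1) x y)) = Tz lam (@hadd (PH H0 H1) (S x) (S y))).
    rewrite La, !TS. reflexivity.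
  - intros a x. apply Inj. change (Tz lam (S (@hscal (PH H0 H1) a x)) = Tz lam (@hscal (PH H0 H1) a (S x))).
    rewrite Ls, !TS. reflexivity.
  - exists (/ c). intro y. rewrite <- !PH_norm. pose proof (Hc (S y)) as L. rewrite TS in L.
    apply Rmult_le_reg_l with c; auto. rewrite <- Rmult_assoc, Rinv_r, Rmult_1_l; lra.
  - intro x. apply Inj. change (Tz lam (S (Tz lam x)) = Tz lam x). rewrite TS. reflexivity.
  - intro y. exact (TS y).
Qed.

End Main.

Theorem mainTheorem12 (H0 H1 : Hilbert)
  (A0 : H0 -> H0) (A1 : H1 -> H1) (B : H1 -> H0) (Bs : H0 -> H1)
  (hA0 : bounded_selfadjoint A0) (hA1 : bounded_selfadjoint A1)
  (hB : bounded_op B) (hBs : bounded_op Bs) (hadj : is_adjoint B Bs)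
  (d : R) (hd : is_dist (spectrum A0) (spectrum A1) d) (hdpos : 0 < d)
  (nV : R) (hnV : is_opnorm_sum (Vop B Bs) nV) (hV : nV < d / 2) :
  forall lam : Cplx, spectrum_sum (Lop A0 A1 B Bs) lam -> Im lam = 0.
Proof.
  eapply final; eauto.
Qed.
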